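(* Let $\mathcal{V}$ be a variety of $\Omega$-algebras with equational base $\Sigma$, and let $\mathcal{W}$ be the variety defined by $\Sigma^p$. Then for any set $X$, the free $\mathcal{W}$-algebra $A=X\mathcal{W}$ is a semilattice sum of $\mathcal{V}$-algebras: $A=\bigsqcup_{s\in S}A_s$, where $S=A/\varrho\cong X\mathcal{S}$ is the free semilattice over $X$ ($\varrho$ the semilattice replica congruence of $A$) and every $\varrho$-class $A_s$ belongs to $\mathcal{V}$. In particular (taking $\Sigma=\mathrm{Id}(\mathcal{V})$), $X\mathcal{V}^p\in\mathcal{V}\circ\mathcal{S}$.
   Context: Standing conventions: $\Omega$-algebras are of a plural similarity type (no nullary operation symbols, at least one operation symbol of arity $\ge2$). $T_n$ is the set of $\Omega$-terms in $x_1,\dots,x_n$ in which all $n$ variables occur. An identity is regular if the same variables occur on both sides. $\mathcal{S}$ is the variety of $\Omega$-algebras satisfying all regular identities; $X\mathcal{S}$ is the free $\mathcal{S}$-algebra over $X$. $\mathcal{V}\circ\mathcal{S}$ is the class of $\Omega$-algebras $A$ having a congruence $\theta$ with $A/\theta\in\mathcal{S}$ and every $\theta$-class (a subalgebra) in $\mathcal{V}$. The semilattice replica congruence of $A$ is the smallest congruence $\varrho$ with $A/\varrho\in\mathcal{S}$. Prolongation: for an identity $\sigma$ of the form $u(y_1,\dots,y_n)=v(y_1,\dots,y_n)$ and $m\ge1$, $\sigma^p_m$ is the set of identities $u(r_1,\dots,r_n)=v(r_1,\dots,r_n)$ obtained by substituting $r_i(x_1,\dots,x_m)$ for $y_i$,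 with $r_i$ ranging over $T_m$; $\sigma^p=\bigcup_m\sigma^p_m$; $\Sigma^p=\bigcup_{\sigma\in\Sigma}\sigma^p$. $\mathcal{V}^p$ is the variety defined by $\mathrm{Id}(\mathcal{V})^p$, where $\mathrm{Id}(\mathcal{V})$ is the set of all identities holding in $\mathcal{V}$. *)

(* Defs.v *)
From mathcomp Require Import all_boot.
From Stdlib Require Import ClassicalEpsilon.
Set Implicit Arguments. Unset Strict Implicit. Unset Printing Implicit Defensive.

Record signature := Signature { sym : Type; ar : sym -> nat }.

Definition plural (s : signature) : Prop :=
  (forall f : sym s, 0 < ar f) /\ (exists f : sym s, 1 < ar f).

Section UA.
Variable s : signature.

Inductive term (V : Type) : Type :=
| Var : V -> term V
| Op : forall f : sym s, ('I_(ar f) -> term V) -> term V.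

Definition identity := (term nat * term nat)%type.

Fixpoint occurs (i : nat) (t : term nat) : Prop :=
  match t with
  | Var j => j = i
  | Op f a => exists k, occurs i (a k)
  end.

Definition in_T (m : nat) (t : term nat) : Prop :=
  forall i, occurs i t <-> i < m.

Fixpoint subst (r : nat -> term nat) (t : term nat) : term nat :=
  match t with
  | Var j => r j
  | Op f a => Op (fun k => subst r (a k))
  end.

Definition regular_id (sigma : identity) : Prop :=
  forall i, occurs i sigma.1 <-> occurs i sigma.2.

Definition prolong (Sig : identity -> Prop) : identity -> Prop :=
  fun tau => exists (sigma : identity) (m : nat) (r : nat -> term nat),
    [/\ Sig sigma, 1 <= m, (forall i, in_T m (r i)) &
        tau = (subst r sigma.1, subst r sigma.2)].

Record alg := Alg { carrier :> Type;
                    op : forall f : sym s, ('I_(ar f) -> carrier) -> carrier }.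

Fixpoint eval (A : alg) (a : nat -> A) (t : term nat) : A :=
  match t with
  | Var j => a j
  | Op f ts => op (fun k => eval a (ts k))
  end.

Definition sat (A : alg) (sigma : identity) : Prop :=
  forall a : nat -> A, eval a sigma.1 = eval a sigma.2.

Definition in_var (Sig : identity -> Prop) (A : alg) : Prop :=
  forall sigma, Sig sigma -> sat A sigma.

Definition IdV (Sig : identity -> Prop) : identity -> Prop :=
  fun sigma => forall B : alg, in_var Sig B -> sat B sigma.

Definition hom (A B : alg) (h : A -> B) : Prop :=
  forall f (a : 'I_(ar f) -> A), h (op a) = op (fun k => h (a k)).

Definition is_free (Sig : identity -> Prop) (X : Type) (A : alg) (iota : X -> A)
  : Prop :=
  in_var Sig A /\
  forall (B : alg), in_var Sig B -> forall g : X -> B,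
    (exists h, hom h /\ forall x, h (iota x) = g x) /\
    (forall h1 h2, hom h1 -> hom h2 -> (forall x, h1 (iota x) = g x) ->
        (forall x, h2 (iota x) = g x) -> forall a, h1 a = h2 a).

Definition congruence (A : alg) (th : A -> A -> Prop) : Prop :=
  [/\ (forall x, th x x), (forall x y, th x y -> th y x),
      (forall x y z, th x y -> th y z -> th x z) &
      (forall f (a b : 'I_(ar f) -> A), (forall k, th (a k) (b k)) ->
         th (op a) (op b))].

Section Quot.
Variables (A : alg) (th : A -> A -> Prop).
Definition qcarrier := {C : A -> Prop | exists a, C = th a}.
Definition cls (a : A) : qcarrier := exist _ (th a) (ex_intro _ a erefl).
Definition rep (c : qcarrier) : A :=
  proj1_sig (constructive_indefinite_description _ (proj2_sig c)).
Definition quot_alg : alg :=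
  @Alg qcarrier (fun f cs => cls (op (fun k => rep (cs k)))).
End Quot.

Definition op_closed (A : alg) (P : A -> Prop) : Prop :=
  forall f (a : 'I_(ar f) -> A), (forall k, P (a k)) -> P (op a).

Definition sub_alg (A : alg) (P : A -> Prop) (H : op_closed P) : alg :=
  @Alg {x : A | P x}
     (fun f a => exist _ (op (fun k => proj1_sig (a k)))
                        (H f _ (fun k => proj2_sig (a k)))).

(* The semilattice replica congruence: smallest congruence with A/rho in S. *)
Definition is_replica (A : alg) (rho : A -> A -> Prop) : Prop :=
  [/\ congruence rho, in_var regular_id (quot_alg rho) &
      forall th, congruence th -> in_var regular_id (quot_alg th) ->
        forall x y, rho x y -> th x y].

Definition in_VoS (Sig : identity -> Prop) (A : alg) : Prop :=
  exists th : A -> A -> Prop,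
    [/\ congruence th, in_var regular_id (quot_alg th) &
        forall a : A, exists H : op_closed (th a), in_var Sig (sub_alg H)].

End UA.

(* Main.v *)
Require Import Defs.
From mathcomp Require Import all_boot.
From mathcomp Require Import boolp.
From Stdlib Require Import ProofIrrelevance.
Set Implicit Arguments. Unset Strict Implicit. Unset Printing Implicit Defensive.

Section Terms.
Variable s : signature.
Implicit Types (t : term s nat).

Fixpoint vars t : seq nat :=
  match t with
  | Var j => [:: j]
  | Op f a => flatten [seq vars (a k) | k <- enum 'I_(ar f)]
  end.

Lemma mem_vars j t : j \in vars t <-> occurs j t.
Proof.
elim: t => [v|f a IH] /=; first by rewrite inE; split => [/eqP ->|->].
split.
- move=> /flattenP [l /mapP [k _ ->]] /IH H; by exists k.
- move=> [k /IH H]; apply/flattenP; exists (vars (a k)) => //.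
  by apply/mapP; exists k => //; rewrite mem_enum.
Qed.

Lemma eval_ext (A : alg s) (a b : nat -> A) t :
  (forall j, occurs j t -> a j = b j) -> eval a t = eval b t.
Proof.
elim: t => [v|f ts IH] /= H; first by apply: H.
congr op; apply: functional_extensionality_dep => k; apply: IH => j Hj.
by apply: H; exists k.
Qed.

Lemma eval_subst (A : alg s) (a : nat -> A) r t :
  eval a (subst r t) = eval (fun j => eval a (r j)) t.
Proof.
elim: t => [v|f ts IH] //=; congr op.
by apply: functional_extensionality_dep => k; apply: IH.
Qed.

Lemma occurs_subst i r t :
  occurs i (subst r t) <-> exists j, occurs j t /\ occurs i (r j).
Proof.
elim: t => [v|f ts IH] /=.
- split; first by move=> H; exists v. by move=> [j [-> H]].
- split.
  + move=> [k /IH [j [Hj Hi]]]; exists j; split => //; by exists k.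
  + move=> [j [[k Hk] Hi]]; exists k; apply/IH; by exists j.
Qed.

Lemma has_var (Hpl : plural s) t : exists j, occurs j t.
Proof.
elim: t => [v|f ts IH] /=; first by exists v.
case: Hpl => H0 _; have [j Hj] := IH (Ordinal (H0 f)); by exists j; exists (Ordinal (H0 f)).
Qed.

Lemma leq_sumn_mem (j : nat) (l : seq nat) : j \in l -> j <= sumn l.
Proof.
elim: l => //= x l IH; rewrite inE => /orP [/eqP ->|/IH H]; first exact: leq_addr.
exact: leq_trans H (leq_addl _ _).
Qed.

End Terms.
Section Quot.
Variable s : signature.
Variable A : alg s.
Implicit Types (t : term s nat).

Lemma sig_eq (T : Type) (P : T -> Prop) (x y : {z | P z}) :
  proj1_sig x = proj1_sig y -> x = y.
Proof.
case: x => x px; case: y => y py /= E; subst y; f_equal; apply: proof_irrelevance.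
Qed.

Lemma eval_th (th : A -> A -> Prop) (a b : nat -> A) t : congruence th ->
  (forall j, th (a j) (b j)) -> th (eval a t) (eval b t).
Proof.
move=> [R _ _ C] H; elim: t => [v|f ts IH] //=; exact: C.
Qed.

Lemma clsK (th : A -> A -> Prop) (c : qcarrier th) : cls th (rep c) = c.
Proof.
apply: sig_eq => /=; rewrite /rep.
by case: (Stdlib.Logic.ClassicalEpsilon.constructive_indefinite_description _ _) => a /= ->.
Qed.

Lemma cls_eq (th : A -> A -> Prop) a b : congruence th ->
  (cls th a = cls th b <-> th a b).
Proof.
move=> [R S T _]; split.
- move=> /(congr1 (@proj1_sig _ _)) /= E; rewrite E; exact: R.
- move=> H; apply: sig_eq => /=; apply: functional_extensionality_dep => x.
  apply: propext; split => Hx; [apply: T (S _ _ H) Hx | exact: T H Hx].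
Qed.

Lemma rep_cls (th : A -> A -> Prop) a : congruence th -> th (rep (cls th a)) a.
Proof. by move=> C; apply/(cls_eq _ _ C); rewrite clsK. Qed.

Lemma eval_quot (th : A -> A -> Prop) (b : nat -> quot_alg th) t :
  congruence th -> eval b t = cls th (eval (fun j => rep (b j)) t).
Proof.
move=> C; elim: t => [v|f ts IH] /=; first by rewrite clsK.
apply/(cls_eq _ _ C); case: (C) => R S T Co; apply: Co => k.
rewrite IH; exact: rep_cls.
Qed.

Lemma quot_S (th : A -> A -> Prop) : congruence th ->
  (in_var (@regular_id s) (quot_alg th) <->
   forall sigma, regular_id sigma -> forall b : nat -> A,
     th (eval b sigma.1) (eval b sigma.2)).
Proof.
move=> C; split.
- move=> H sigma Hs b; have := H sigma Hs (fun j => cls th (b j)).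
  rewrite !eval_quot // => /(cls_eq _ _ C) E.
  case: (C) => R S T _.
  have Hr : forall j, th (rep (cls th (b j))) (b j) by move=> j; exact: rep_cls.
  apply: T (T _ _ _ (S _ _ (eval_th sigma.1 C Hr)) E) _.
  exact: eval_th.
- move=> H sigma Hs b; rewrite !eval_quot //; apply/(cls_eq _ _ C); exact: H.
Qed.

Lemma hom_eval (B : alg s) (k : A -> B) (a : nat -> A) t :
  hom k -> k (eval a t) = eval (fun j => k (a j)) t.
Proof.
move=> Hk; elim: t => [v|f ts IH] //=; rewrite Hk; congr op.
by apply: functional_extensionality_dep => i.
Qed.

Lemma ker_cong (B : alg s) (k : A -> B) : hom k -> in_var (@regular_id s) B ->
  congruence (fun x y => k x = k y) /\
  in_var (@regular_id s) (quot_alg (fun x y => k x = k y)).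
Proof.
move=> Hk HB.
have C : congruence (fun x y => k x = k y).
  split.
  - by [].
  - by move=> x y E; rewrite E.
  - by move=> x y z E1 E2; rewrite E1 E2.
  move=> f a b H; rewrite !Hk; congr op; exact: functional_extensionality_dep.
split => //; apply/(quot_S C) => sigma Hs b.
by rewrite !hom_eval //; apply: HB.
Qed.

Lemma cls_hom (th : A -> A -> Prop) : congruence th ->
  @hom s A (quot_alg th) (cls th).
Proof.
move=> C f a /=; apply/(cls_eq _ _ C); case: (C) => R S T Co; apply: Co => k.
apply: S; exact: rep_cls.
Qed.

Lemma sub_eval (P : A -> Prop) (H : op_closed P) (a : nat -> sub_alg H) t :
  proj1_sig (eval a t) = eval (fun j => proj1_sig (a j)) t.
Proof.
elim: t => [v|f ts IH] //=; congr op; exact: functional_extensionality_dep.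
Qed.

Lemma sub_var Sig (P : A -> Prop) (H : op_closed P) :
  in_var Sig A -> in_var Sig (sub_alg H).
Proof.
move=> HA sigma Hs a; apply: sig_eq; rewrite !sub_eval; exact: HA.
Qed.

End Quot.
Section Main.
Variable s : signature.
Hypothesis Hpl : plural s.
Variable Sig : identity s -> Prop.
Variables (X : Type) (A : alg s) (iota : X -> A).
Hypothesis Hfree : is_free (prolong Sig) iota.

Lemma prolong_regular tau : prolong Sig tau -> regular_id tau.
Proof.
move=> [sigma [m [r [_ _ Hr ->]]]] i /=.
have key : forall t, occurs i (subst r t) <-> i < m.
  move=> t; rewrite occurs_subst; split.
  - by move=> [j [_ /(Hr j i)]].
  - move=> Him; have [j Hj] := has_var Hpl t; exists j; split => //; exact/(Hr j i).
by rewrite !key.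
Qed.

Lemma S_W (B : alg s) : in_var (@regular_id s) B -> in_var (prolong Sig) B.
Proof. move=> HB tau /prolong_regular; exact: HB. Qed.

Definition PX : alg s := @Alg s (X -> Prop) (fun f a x => exists k, a k x).

Lemma eval_PX (b : nat -> PX) t :
  eval b t = fun x => exists j, occurs j t /\ b j x.
Proof.
elim: t => [v|f ts IH] /=.
- apply: functional_extensionality_dep => x; apply: propext; split.
  + by move=> H; exists v.
  + by move=> [j [-> H]].
- apply: functional_extensionality_dep => x; apply: propext; split.
  + move=> [k]; rewrite IH => [[j [Hj Hb]]]; exists j; split => //; by exists k.
  + move=> [j [[k Hk] Hb]]; exists k; rewrite IH; by exists j.
Qed.

Lemma PX_S : in_var (@regular_id s) PX.
Proof.
move=> sigma Hs b; rewrite !eval_PX; apply: functional_extensionality_dep => x.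
apply: propext; split => [[j [Hj Hb]]|[j [Hj Hb]]]; exists j; split => //; exact/Hs.
Qed.

Definition Gen (a : A) := exists (e : nat -> X) (t : term s nat),
  a = eval (fun j => iota (e j)) t.

Lemma combine N (Npos : 0 < N) (F : 'I_N -> A) : (forall k, Gen (F k)) ->
  exists (e : nat -> X) (ts : 'I_N -> term s nat),
    forall k, F k = eval (fun j => iota (e j)) (ts k).
Proof.
move=> HF.
have Hex : forall k, exists p : (nat -> X) * term s nat,
    F k = eval (fun j => iota (p.1 j)) p.2.
  move=> k; have [e [t Ht]] := HF k; by exists (e, t).
have [ET HET] := choice Hex.
exists (fun n => (ET (Ordinal (ltn_pmod n Npos))).1 (n %/ N)).
exists (fun k : 'I_N => subst (fun j => Var s (j * N + k)) (ET k).2).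
move=> k; rewrite HET eval_subst; apply: eval_ext => j _ /=.
have -> : Ordinal (ltn_pmod (j * N + k) Npos) = k.
  by apply: val_inj => /=; rewrite modnMDl modn_small.
by rewrite divnMDl // divn_small // addn0.
Qed.

Lemma Gen_closed : op_closed Gen.
Proof.
move=> f a Ha; case: Hpl => H0 _.
have [e [ts Hts]] := combine (H0 f) Ha.
exists e, (Op ts) => /=; congr op; exact: functional_extensionality_dep.
Qed.

Lemma all_Gen (a : A) : Gen a.
Proof.
case: Hfree => HA Hu.
have HG := @sub_var s A (prolong Sig) Gen Gen_closed HA.
have Giota : forall x, Gen (iota x) by move=> x; exists (fun _ => x), (Var s 0).
have [[g [Hg Hgi]] _] := Hu _ HG (fun x => exist _ (iota x) (Giota x)).
have [_ U] := Hu _ HA iota.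
have E := U (fun y => proj1_sig (g y)) id.
suff <- : proj1_sig (g a) = a by exact: proj2_sig.
apply: E.
- by move=> f b /=; rewrite Hg.
- by [].
- by move=> x /=; rewrite Hgi.
- by [].
Qed.


Lemma hX_exists : exists hX : A -> PX,
  hom hX /\ forall e t, hX (eval (fun j => iota (e j)) t) =
     (fun y => exists j, occurs j t /\ e j = y).
Proof.
case: Hfree => _ Hu.
have [[h [Hh Hhi]] _] := Hu PX (S_W PX_S) (fun x y => x = y).
exists h; split => // e t; rewrite hom_eval //.
have -> : (fun j => h (iota (e j))) = (fun j y => e j = y).
  apply: functional_extensionality_dep => j; exact: Hhi.
by rewrite eval_PX.
Qed.

Lemma dedup (B : alg s) (g : X -> B) N (i0 : 'I_N) (e : nat -> X)
  (ts : 'I_N -> term s nat) :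
  (forall i y, (exists j, occurs j (ts i) /\ e j = y) <->
               (exists j, occurs j (ts i0) /\ e j = y)) ->
  exists m (e' : nat -> X) (rs : 'I_N -> term s nat), 1 <= m /\
    forall i, in_T m (rs i) /\
      eval (fun j => g (e' j)) (rs i) = eval (fun j => g (e j)) (ts i).
Proof.
move=> He.
pose ec : nat -> {classic X} := e.
pose L := undup [seq ec j | j <- vars (ts i0)].
have memL : forall i j, occurs j (ts i) -> ec j \in L.
  move=> i j Hj; have [j' [Hj' Ej']] := (He i (e j)).1 (ex_intro _ j (conj Hj erefl)).
  rewrite mem_undup /ec -Ej'; apply: map_f; exact/mem_vars.
exists (size L), (fun k => nth (ec 0) L k),
  (fun i => subst (fun j => Var s (index (ec j) L)) (ts i)).
split.
  have [j Hj] := has_var Hpl (ts i0).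
  have := memL _ _ Hj; by case: (L).
move=> i; split.
- move=> k; rewrite occurs_subst; split.
  + move=> [j [Hj /= <-]]; rewrite index_mem; exact: memL Hj.
  + move=> Hk; have := mem_nth (ec 0) Hk; rewrite mem_undup => /mapP [j' Hj' Ej'].
    have [j [Hj Ej]] := (He i (e j')).2 (ex_intro _ j' (conj (proj1 (mem_vars _ _) Hj') erefl)).
    exists j; split => //=; rewrite /ec Ej -/(ec j') -Ej' index_uniq //; exact: undup_uniq.
- rewrite eval_subst; apply: eval_ext => j Hj /=; rewrite nth_index //; exact: memL Hj.
Qed.

End Main.

Section Replica.
Variable s : signature.
Variable A : alg s.

Lemma replica_exists : exists rho : A -> A -> Prop, is_replica rho.
Proof.
pose rho0 x y := forall th : A -> A -> Prop, congruence th ->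
  in_var (@regular_id s) (quot_alg th) -> th x y.
have C : congruence rho0.
  split.
  - by move=> x th [R _ _ _].
  - by move=> x y H th Cth Sth; case: (Cth) => _ S _ _; apply: S; apply: H.
  - move=> x y z H1 H2 th Cth Sth; case: (Cth) => _ _ T _.
    exact: T (H1 th Cth Sth) (H2 th Cth Sth).
  - move=> f a b H th Cth Sth; case: (Cth) => _ _ _ Co; apply: Co => k.
    exact: H.
exists rho0; split => //.
- apply/(quot_S C) => sigma Hs b th Cth Sth; exact: (proj1 (quot_S Cth) Sth).
- by move=> th Cth Sth x y H; apply: H.
Qed.

End Replica.
Section Main2.
Variable s : signature.
Hypothesis Hpl : plural s.
Variable Sig : identity s -> Prop.
Variables (X : Type) (A : alg s) (iota : X -> A).
Hypothesis Hfree : is_free (prolong Sig) iota.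
Variable rho : A -> A -> Prop.
Hypothesis Hrho : is_replica rho.

Lemma rho_ker (B : alg s) (k : A -> B) : hom k -> in_var (@regular_id s) B ->
  forall x y, rho x y -> k x = k y.
Proof.
move=> Hk HB; have [C S] := ker_cong Hk HB; case: Hrho => _ _ M; exact: M.
Qed.

Lemma quot_free :
  @is_free s (@regular_id s) X (quot_alg rho) (fun x => cls rho (iota x)).
Proof.
case: Hrho => C Sq _; case: Hfree => HA Hu.
split => // B HB g; split.
- have [[k [Hk Hki]] _] := Hu B (S_W Hpl HB) g.
  exists (fun c => k (rep c)); split.
  + move=> f cs /=; rewrite (rho_ker Hk HB (rep_cls _ C)) Hk //.
  + by move=> x /=; rewrite (rho_ker Hk HB (rep_cls _ C)).
- move=> h1 h2 H1 H2 E1 E2 c; rewrite -(clsK c).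
  have [_ U] := Hu B (S_W Hpl HB) g.
  apply: (U (fun a => h1 (cls rho a)) (fun a => h2 (cls rho a))) => //.
  + by move=> f a; rewrite (cls_hom C) H1.
  + by move=> f a; rewrite (cls_hom C) H2.
Qed.

Lemma classes (a0 : A) : exists H : op_closed (rho a0), in_var Sig (sub_alg H).
Proof.
case: (Hrho) => C Sq _; case: (C) => R Sy T Co.
have H : op_closed (rho a0).
  move=> f a Ha; case: Hpl => H0 _.
  pose idem : identity s := (Op (fun _ : 'I_(ar f) => Var s 0), Var s 0).
  have Hreg : regular_id idem.
    move=> i /=; split; first by move=> [].
    by move=> <-; exists (Ordinal (H0 f)).
  have E := proj1 (quot_S C) Sq idem Hreg (fun _ => a0); rewrite /= in E.
  apply: T (Sy _ _ E) _; apply: Co => k; exact: Ha.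
exists H => sigma Hs a; apply: sig_eq; rewrite !sub_eval.
pose b j := proj1_sig (a j).
have Hb : forall j, rho a0 (b j) by move=> j; exact: proj2_sig.
pose N := (sumn (vars sigma.1 ++ vars sigma.2)).+1.
have [e [ts Hts]] := combine (ltn0Sn _) (fun i : 'I_N => all_Gen Hpl Hfree (b i)).
have [hX [HhX HhXe]] := hX_exists Hpl Hfree.
have Hsame : forall i y, (exists j, occurs j (ts i) /\ e j = y) <->
                         (exists j, occurs j (ts ord0) /\ e j = y).
  move=> i y.
  have E1 := rho_ker HhX (@PX_S s X) (Hb i); have E2 := rho_ker HhX (@PX_S s X) (Hb (ord0 : 'I_N)).
  have := congr1 (fun P => P y) (etrans (esym E1) E2).
  rewrite (Hts i) (Hts ord0) !HhXe /= => ->; exact: iff_refl.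
have [m [e' [rs [Hm Hrs]]]] := dedup Hpl iota Hsame.
pose r j := rs (inord j).
have Hprol : prolong Sig (subst r sigma.1, subst r sigma.2).
  exists sigma, m, r; split => //; move=> j; exact: (proj1 (Hrs _)).
have E := proj1 Hfree _ Hprol (fun j => iota (e' j)).
rewrite /= !eval_subst in E.
have Hw : forall w, (forall j, occurs j w -> j < N) ->
    eval (fun j => eval (fun j0 => iota (e' j0)) (r j)) w = eval b w.
  move=> w Hw; apply: eval_ext => j Hj.
  rewrite /r (proj2 (Hrs _)) -Hts /b inordK //; exact: Hw.
have Hu : forall j, occurs j sigma.1 -> j < N.
  move=> j /mem_vars Hj; rewrite ltnS; apply: leq_sumn_mem; by rewrite mem_cat Hj.
have Hv : forall j, occurs j sigma.2 -> j < N.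
  move=> j /mem_vars Hj; rewrite ltnS; apply: leq_sumn_mem; by rewrite mem_cat Hj orbT.
by rewrite -(Hw _ Hu) -(Hw _ Hv).
Qed.

End Main2.

Lemma IdV_var (s : signature) (Sig : identity s -> Prop) (B : alg s) :
  in_var (IdV Sig) B -> in_var Sig B.
Proof. by move=> H sigma Hs; apply: H => C HC; apply: HC. Qed.

Theorem proposition3p2 (s : signature) (Hpl : plural s)
  (Sig : identity s -> Prop) (X : Type) (A : alg s) (iota : X -> A) :
  is_free (prolong Sig) iota ->
  [/\ (exists rho : A -> A -> Prop, is_replica rho),
      (forall rho : A -> A -> Prop, is_replica rho ->
         @is_free s (@regular_id s) X (quot_alg rho) (fun x => cls rho (iota x)) /\
         (forall a : A, exists H : op_closed (rho a), in_var Sig (sub_alg H))) &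
      (forall (B : alg s) (kappa : X -> B),
         is_free (prolong (IdV Sig)) kappa -> in_VoS Sig B)].
Proof.
move=> Hf; split.
- exact: replica_exists.
- move=> rho Hr; split.
  + exact (quot_free Hpl Hf Hr).
  + exact (classes Hpl Hf Hr).
- move=> B kappa Hk; have [rho Hr] := replica_exists B.
  exists rho; case: (Hr) => C Sq _; split => // a.
  have [H HV] := classes Hpl Hk Hr a; exists H; exact: IdV_var.
Qed.
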